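(* Let $\gamma > 1$ and let $I$ be a $\gamma$-stable instance of the metric Steiner tree problem with optimal Steiner tree $\mathrm{OPT}$. Let $H$ be a subgraph of $\mathrm{OPT}$ with at least one edge, and let $ab$ be an edge of $H$. If $c \in V(\mathrm{OPT}) \setminus V(H)$ satisfies $w_{ca} \le \gamma(\gamma - 1) w_{ab}$, then $ca$ is an edge of $\mathrm{OPT}$.
   Context: An instance of the metric Steiner tree problem consists of a finite set $V$ of points of a metric space with metric $d$, a set $T \subseteq V$ of terminals, and the complete graph on $V$ with edge weights $w_{uv} = d(u,v)$. Points of $V \setminus T$ are Steiner points. A Steiner tree is a tree in this complete graph whose vertex set contains all of $T$; its weight is the sum of its edge weights. For $\gamma > 1$, the instance is $\gamma$-stable if it has a minimum-weight Steiner tree $\mathrm{OPT}$ such that for every $w' : V \times V \to \mathbb{R}_{\ge 0}$ with $w_{uv} \le w'_{uv} \le \gamma w_{uv}$ for all $u,v$, every minimum-weight Steiner tree with respect to $w'$ equals $\mathrm{OPT}$. $V(\mathrm{OPT})$ and $V(H)$ denote vertex sets. *)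

(* Defs.v *)
From mathcomp Require Import all_boot all_order all_algebra.
Set Implicit Arguments. Unset Strict Implicit. Unset Printing Implicit Defensive.
Import Order.TTheory GRing.Theory Num.Theory.
Local Open Scope ring_scope.

Section Steiner.
Variables (R : realFieldType) (V : finType).

Definition is_metric (d : V -> V -> R) : Prop :=
  [/\ forall x y, d x y = 0 <-> x = y,
      forall x y, d x y = d y x &
      forall x y z, d x z <= d x y + d y z].

Definition is_edge (e : {set V}) : bool := #|e| == 2%N.

(* Edge weight induced by d: for e = {u,v}, this is d u v. *)
Definition wd (d : V -> V -> R) (e : {set V}) : R :=
  (\sum_(u in e) \sum_(v in e) d u v) / 2.

Definition graph := ({set V} * {set {set V}})%type.

Definition adj (E : {set {set V}}) : rel V := fun x y => (x != y) && ([set x; y] \in E).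

Definition wf_graph (G : graph) : Prop :=
  forall e, e \in G.2 -> is_edge e && (e \subset G.1).

Definition connected_graph (G : graph) : Prop :=
  forall u v, u \in G.1 -> v \in G.1 -> connect (adj G.2) u v.

Definition acyclic_graph (G : graph) : Prop :=
  ~ exists s : seq V, [&& (2 < size s)%N, uniq s & cycle (adj G.2) s].

Definition is_tree (G : graph) : Prop :=
  [/\ wf_graph G, G.1 != set0, connected_graph G & acyclic_graph G].

Definition steiner_tree (T : {set V}) (G : graph) : Prop :=
  is_tree G /\ T \subset G.1.

Definition tree_weight (w : {set V} -> R) (G : graph) : R := \sum_(e in G.2) w e.

Definition min_steiner_tree (w : {set V} -> R) (T : {set V}) (G : graph) : Prop :=
  steiner_tree T G /\
  forall G', steiner_tree T G' -> tree_weight w G <= tree_weight w G'.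

Definition perturbation (gamma : R) (d : V -> V -> R) (w' : {set V} -> R) : Prop :=
  forall e, is_edge e -> 0 <= w' e /\ wd d e <= w' e <= gamma * wd d e.

Definition stable (gamma : R) (d : V -> V -> R) (T : {set V}) : Prop :=
  exists OPT : graph, min_steiner_tree (wd d) T OPT /\
    forall w', perturbation gamma d w' ->
      forall G, min_steiner_tree w' T G -> G = OPT.

Definition subgraph (H G : graph) : Prop :=
  [/\ wf_graph H, H.1 \subset G.1 & H.2 \subset G.2].

End Steiner.

(* Main.v *)
Require Import Defs.
From mathcomp Require Import all_boot all_order all_algebra.
From mathcomp Require Import ring lra.
From Stdlib Require Import Classical.
Set Implicit Arguments. Unset Strict Implicit. Unset Printing Implicit Defensive.
Import Order.TTheory GRing.Theory Num.Theory.
Local Open Scope ring_scope.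

Section Aux.
Variables (R : realFieldType) (V : finType).
Implicit Types (E : {set {set V}}).

Lemma my_connect_ind (X : finType) (r : rel X) (P : X -> Prop) x y :
  P x -> (forall a b, P a -> r a b -> P b) -> connect r x y -> P y.
Proof.
move=> Px H /connectP [s]; elim: s x Px => [|z s IH] x Px /=; first by move=> _ ->.
by case/andP=> rxz ps ly; apply: (IH z) => //; exact: H Px rxz.
Qed.

Lemma set2C (x y : V) : [set x; y] = [set y; x].
Proof. exact: setUC. Qed.

Lemma adj_sym E : symmetric (adj E).
Proof. by move=> x y; rewrite /adj eq_sym set2C. Qed.

Lemma connect_adj_sym E x y : connect (adj E) x y = connect (adj E) y x.
Proof. exact: (sym_connect_sym (adj_sym E)). Qed.

Lemma set2_not_in (x y z w : V) : z != x -> z != y -> [set x; y] != [set z; w].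
Proof.
move=> zx zy; apply/negP => /eqP h.
have : z \in [set x; y] by rewrite h set21.
by rewrite in_set2 => /orP [] /eqP h'; [move/eqP: zx | move/eqP: zy].
Qed.

Lemma adjD E e x y : adj E x y -> [set x; y] != e -> adj (E :\ e) x y.
Proof. by rewrite /adj => /andP [-> h] ne; rewrite in_setD1 ne h. Qed.

Lemma path_avoid E (z w x : V) (s : seq V) :
  path (adj E) x s -> z \notin x :: s -> path (adj (E :\ [set z; w])) x s.
Proof.
move=> hp hz; apply: (sub_in_path (P := predC1 z)) hp; last first.
  by apply/allP => y /= yin; apply: contraNneq hz => <-.
move=> u v /= zu zv huv; apply: (adjD huv); apply: set2_not_in; rewrite eq_sym; [exact: zu|exact: zv].
Qed.

Lemma ex_min (X : finType) (P : X -> Prop) (f : X -> R) :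
  (exists x, P x) -> exists x, P x /\ forall y, P y -> f x <= f y.
Proof.
move=> [x0 Px0].
suff: forall s : seq X, (exists2 x, x \in s & P x) ->
    exists x, P x /\ forall y, y \in s -> P y -> f x <= f y.
  move/(_ (enum X)) => [|m [Pm Hm]]; first by exists x0; rewrite ?mem_enum.
  by exists m; split=> // y; apply: Hm; rewrite mem_enum.
elim=> [|z s IH] [x]; first by rewrite in_nil.
move=> xin Px.
case: (classic (exists2 x, x \in s & P x)) => [/IH [m [Pm Hm]]|nex].
- case: (classic (P z)) => Pz.
  + case: (lerP (f z) (f m)) => hzm.
    * exists z; split=> // y; rewrite in_cons => /orP [/eqP -> _|ys Py] //.
      exact: le_trans hzm (Hm y ys Py).
    * exists m; split=> // y; rewrite in_cons => /orP [/eqP -> _|ys Py];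
        [exact: ltW|exact: Hm].
  + exists m; split=> // y; rewrite in_cons => /orP [/eqP -> //|ys Py].
    exact: Hm.
- have xz : x = z.
    move: xin; rewrite in_cons => /orP [/eqP //|xs]; by case: nex; exists x.
  subst; exists z; split=> // y; rewrite in_cons => /orP [/eqP -> _ //|ys Py].
  by case: nex; exists y.
Qed.

Lemma tw_sub (w : {set V} -> R) (G0 G : graph V) : G0.2 \subset G.2 ->
  (forall e, e \in G.2 -> 0 <= w e) -> tree_weight w G0 <= tree_weight w G.
Proof.
move=> sub hw; rewrite /tree_weight [X in _ <= X](big_setID G0.2) /= (setIidPr sub) lerDl.
by apply: sumr_ge0 => e; rewrite in_setD => /andP [_]; exact: hw.
Qed.

Lemma extract (n : nat) : forall G : graph V, (#|G.2| <= n)%N -> wf_graph G ->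
  G.1 != set0 -> connected_graph G ->
  exists G0 : graph V, [/\ is_tree G0, G0.1 = G.1 & G0.2 \subset G.2].
Proof.
elim: n => [|n IH] G hn wf ne co.
  exists G; split=> //; split=> // [[s]] /and3P [hs _ hc].
  move: hn; rewrite leqn0 cards_eq0 => /eqP E0.
  case: s hs hc => [|x [|y s]] //= _;
  by case/andP => h _; move: h; rewrite /adj /= E0 inE andbF.
case: (classic (acyclic_graph G)) => ac; first by exists G; split.
case: (classic (exists s : seq V, [&& (2 < size s)%N, uniq s & cycle (adj G.2) s]));
  last by move=> h; case: ac.
move=> [s] /and3P [hs hu hc].
case: s hs hu hc => [|x [|y [|z r]]] // _ hu hc.
set r' := z :: r in hu hc.
move: hc; rewrite (cycle_path x) => /andP [hl /andP [hxy hp]].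
have {}hp : path (adj G.2) y r' := hp.
set E' := G.2 :\ [set x; y].
move: hu; rewrite cons_uniq => /andP [xnin]; rewrite cons_uniq => /andP [yr _].
have p' : path (adj E') y r' by apply: path_avoid.
have lyx : adj E' (last y r') x.
  apply: (adjD hl); rewrite set2C; apply/negP => /eqP h.
  have : y \in [set x; last z r] by rewrite h set22.
  rewrite in_set2 => /orP [/eqP yx|/eqP yl].
    by move: xnin; rewrite yx in_cons eqxx.
  by move: yr; rewrite yl /r' mem_last.
have cyx : connect (adj E') y x.
  apply: connect_trans (connect1 lyx); apply/connectP; by exists r'.
have [] := IH (G.1, E').
- move: hn; rewrite /= /E' (cardsD1 [set x; y] G.2).
  by move: hxy => /andP [_ ->].
- move=> e /=; rewrite in_setD1 => /andP [_ he]; exact: wf.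
- done.
- move=> u v hu' hv' /=; apply: (connect_sub (e := adj G.2)); last exact: co.
  move=> a b hab; case: (eqVneq [set a; b] [set x; y]) => hs; last first.
    by apply: connect1; apply: adjD.
  have ha : a \in [set x; y] by rewrite -hs set21.
  have hb : b \in [set x; y] by rewrite -hs set22.
  move: hab => /andP [nab _].
  move: ha hb; rewrite !in_set2 => /orP [] /eqP -> /orP [] /eqP ->;
    rewrite ?eqxx // in nab *; by rewrite connect_adj_sym.
- move=> G0 [t e1 e2]; exists G0; split=> //.
  by apply: subset_trans e2 _; apply: subsetDl.
Qed.

End Aux.

Section Main.
Variables (R : realFieldType) (V : finType) (d : V -> V -> R) (T : {set V})
  (gamma : R) (OPT : graph V).
Hypotheses (hm : is_metric d) (hg : 1 < gamma) (hs : stable gamma d T)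
  (hopt : min_steiner_tree (wd d) T OPT).

Lemma d0 x : d x x = 0. Proof. by case: hm => h _ _; apply/h. Qed.
Lemma dsym x y : d x y = d y x. Proof. by case: hm. Qed.
Lemma dtri x y z : d x z <= d x y + d y z. Proof. by case: hm. Qed.
Lemma d_ge0 x y : 0 <= d x y.
Proof. have := dtri x y x; rewrite d0 (dsym y x) => h; lra. Qed.

Lemma wd_ge0 e : 0 <= wd d e.
Proof.
rewrite /wd; apply: divr_ge0; last by [].
by apply: sumr_ge0 => u _; apply: sumr_ge0 => v _; exact: d_ge0.
Qed.

Lemma wd2 x y : x != y -> wd d [set x; y] = d x y.
Proof.
move=> hxy.
have s2 : forall F : V -> R, \sum_(u in [set x; y]) F u = F x + F y.
  by move=> F; rewrite big_setU1 ?in_set1 // big_set1.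
rewrite /wd !s2 !d0 (dsym y x); lra.
Qed.

Lemma pert_wd : perturbation gamma d (wd d).
Proof.
move=> e _; have := wd_ge0 e => h; split=> //; apply/andP; split=> //.
by rewrite ler_peMl // ltW.
Qed.

Lemma uniqOPT w' : perturbation gamma d w' ->
  forall G, min_steiner_tree w' T G -> G = OPT.
Proof.
case: hs => O [hO hU] hp G hG.
have e1 := hU _ pert_wd _ hopt.
rewrite e1; exact: hU _ hp _ hG.
Qed.

Lemma no_better w' M : perturbation gamma d w' -> steiner_tree T M -> M <> OPT ->
  tree_weight w' M <= tree_weight w' OPT -> False.
Proof.
move=> hp hM ne hle.
have [m [hm' hmin]] := ex_min (X := ({set V} * {set {set V}})%type)
   (P := steiner_tree T) (tree_weight w') (ex_intro _ M hM).
have em : m = OPT := uniqOPT hp (conj hm' hmin).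
apply: ne; apply: (uniqOPT hp); split=> // G' hG'.
apply: le_trans hle _; rewrite -em; exact: hmin.
Qed.

Lemma swap p q u v : p != q -> [set p; q] \in OPT.2 -> u \in OPT.1 ->
  v \in OPT.1 -> u != v -> [set u; v] \notin OPT.2 ->
  connect (adj (OPT.2 :\ [set p; q])) p u ->
  connect (adj (OPT.2 :\ [set p; q])) q v -> gamma * d p q < d u v.
Proof.
move=> npq eO uO vO nuv fO cpu cqv.
rewrite ltNge; apply/negP => hle.
set e := [set p; q] in eO cpu cqv.
set K := connect (adj (OPT.2 :\ e)).
set E' := [set u; v] |: (OPT.2 :\ e).
have [[[wfO neO coO acO] TO] _] := hopt.
have pO : p \in OPT.1.
  by have /andP [_ /subsetP] := wfO _ eO; apply; rewrite /e set21.
have side : forall z, z \in OPT.1 -> K p z || K q z.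
  move=> z zO.
  apply: (my_connect_ind (P := fun z => K p z || K q z) (r := adj OPT.2) (x := p));
    first by rewrite /K connect0.
  - move=> a b hab hr; case: (eqVneq [set a; b] e) => hs'.
      have : b \in e by rewrite -hs' set22.
      by rewrite /e in_set2 => /orP [] /eqP ->; rewrite /K connect0 ?orbT.
    move: hab => /orP [] h; [apply/orP; left|apply/orP; right];
      apply: connect_trans h (connect1 _); exact: adjD.
  - exact: coO.
have sub : subrel (connect (adj (OPT.2 :\ e))) (connect (adj E')).
  apply: connect_sub => a b hab; apply: connect1; move: hab.
  by rewrite /adj => /andP [-> h]; rewrite /E' in_setU1 h orbT.
have Kpq : connect (adj E') p q.
  apply: connect_trans (sub _ _ cpu) _.
  have huv : adj E' u v by rewrite /adj nuv /E' setU11.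
  apply: connect_trans (connect1 huv) _.
  rewrite connect_adj_sym; exact: sub _ _ cqv.
have Kp : forall z, z \in OPT.1 -> connect (adj E') p z.
  move=> z /side /orP [h|h]; first exact: sub.
  exact: connect_trans Kpq (sub _ _ h).
have wfG : wf_graph (OPT.1, E').
  move=> g /=; rewrite /E' in_setU1 => /orP [/eqP ->|]; last first.
    by rewrite in_setD1 => /andP [_]; exact: wfO.
  rewrite /is_edge cards2 nuv /=; apply/subsetP => z.
  by rewrite in_set2 => /orP [] /eqP ->.
have coG : connected_graph (OPT.1, E').
  move=> a b /= ha hb; apply: connect_trans (Kp b hb).
  rewrite connect_adj_sym; exact: Kp.
have [M [tM M1 M2]] := extract (leqnn _) wfG neO coG.
pose w' := fun g => if g == e then gamma * wd d g else wd d g.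
have pw : perturbation gamma d w'.
  move=> g _; rewrite /w'; have h := wd_ge0 g.
  have h1 : wd d g <= gamma * wd d g by rewrite ler_peMl // ltW.
  have h2 : 0 <= gamma * wd d g by apply: mulr_ge0 => //; rewrite ltW // (lt_trans ltr01).
  by case: ifP => _; (split; [|apply/andP; split]).
apply: (no_better pw (M := M)).
- by split=> //; rewrite M1.
- move=> eM; have : e \in M.2 by rewrite eM.
  move/(subsetP M2); rewrite /E' in_setU1 setD11 orbF => /eqP he.
  by move: fO; rewrite -he eO.
- apply: le_trans (tw_sub (G := (OPT.1, E')) M2 _) _.
    move=> g _; rewrite /w'; have h := wd_ge0 g.
    by case: ifP => _ //; apply: mulr_ge0 => //; rewrite ltW // (lt_trans ltr01).
  rewrite /tree_weight /= /E' big_setU1 /=; last first.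
    by rewrite in_setD1 negb_and (negbTE fO) orbT.
  rewrite [X in _ <= X](big_setD1 _ eO) /=.
  have hne : ([set u; v] == e) = false.
    by apply/negbTE; apply: contraNneq fO => ->.
  rewrite /w' eqxx hne lerD2r wd2 // wd2 //.
Qed.

End Main.

Theorem mainTheorem7 (R : realFieldType) (V : finType) (d : V -> V -> R)
  (T : {set V}) (gamma : R) (OPT H : graph V) (a b c : V) :
  is_metric d -> 1 < gamma ->
  stable gamma d T -> min_steiner_tree (wd d) T OPT ->
  subgraph H OPT -> H.2 != set0 ->
  [set a; b] \in H.2 ->
  c \in OPT.1 -> c \notin H.1 ->
  wd d [set c; a] <= gamma * (gamma - 1) * wd d [set a; b] ->
  [set c; a] \in OPT.2.
Proof.
move=> hm hg hs hopt [wfH H1 H2] hne abH cO cH hle.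
apply/negPn/negP => fO.
have L := swap hm hg hs hopt.
have [[[wfO neO coO acO] TO] _] := hopt.
have abO : [set a; b] \in OPT.2 := subsetP H2 _ abH.
have /andP [eab sabH] := wfH _ abH.
have nab : a != b by move: eab; rewrite /is_edge cards2; case: (a != b).
have aH : a \in H.1 by apply: (subsetP sabH); rewrite set21.
have bH : b \in H.1 by apply: (subsetP sabH); rewrite set22.
have aO : a \in OPT.1 by apply: (subsetP H1).
have bO : b \in OPT.1 by apply: (subsetP H1).
have nca : c != a by apply: contraNneq cH => ->.
have ncb : c != b by apply: contraNneq cH => ->.
have fO' : [set a; c] \notin OPT.2 by rewrite set2C.
have inO : forall x y, [set x; y] \in OPT.2 -> y \in OPT.1.
  by move=> x y /wfO /andP [_ /subsetP]; apply; rewrite set22.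
rewrite wd2 // wd2 // in hle.
have g0 : 0 < gamma by apply: lt_trans hg; exact: ltr01.
have /connectP [s0 ps0 ls0] := coO a c aO cO.
move: ls0; case: (shortenP ps0) => s ps us _ ls.
case: s ps us ls => [|x s1] ps us ls; first by move: nca; rewrite ls eqxx.
move: ps => /andP [hax ps].
move: (hax) => /andP [nax axO].
have xO : x \in OPT.1 := inO _ _ axO.
have anx : a \notin x :: s1 by move: us; rewrite cons_uniq => /andP [].
case: (eqVneq x b) => [xb|xb].
- subst x.
  case: s1 ps us ls anx => [|y s2] ps us ls anx; first by move: ncb; rewrite ls eqxx.
  move: ps => /andP [hby ps].
  move: (hby) => /andP [nby byO].
  have yO : y \in OPT.1 := inO _ _ byO.
  have bny : b \notin y :: s2 by move: us; rewrite cons_uniq => /andP [_]; rewrite cons_uniq => /andP [].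
  have any : a != y by move: anx; rewrite !inE !negb_or => /and3P [_ ->].
  have h1 : gamma * d b y < d a c.
    apply: (L b y a c) => //; first by rewrite eq_sym.
      apply: connect1; apply: adjD; first by rewrite adj_sym.
      rewrite [[set b; y]]set2C; apply: set2_not_in; first by rewrite eq_sym.
      by rewrite eq_sym.
    apply/connectP; exists s2; first exact: path_avoid.
    exact: ls.
  have ayO : [set a; y] \notin OPT.2.
    apply/negP => ayO; apply: acO; exists [:: a; b; y].
    rewrite /= !inE !negb_or nab any nby /= /adj /= nab nby (eq_sym y a) any.
    by rewrite abO byO set2C ayO.
  have h2 : gamma * d a b < d a y.
    apply: (L a b a y) => //.
    apply: connect1; apply: adjD => //.
    by apply: set2_not_in; rewrite // eq_sym.
  have h3 := dtri hm a b y.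
  rewrite (dsym hm c a) in hle.
  have h5 : 0 < gamma * (d b y + d a b - gamma * d a b).
    by apply: mulr_gt0 => //; lra.
  nra.
- have h1 : gamma * d a x < d a c.
    apply: (L a x a c) => //; first by rewrite eq_sym.
    apply/connectP; exists s1; first exact: path_avoid.
    exact: ls.
  have xbO : [set x; b] \notin OPT.2.
    apply/negP => xbO; apply: acO; exists [:: a; x; b].
    rewrite /= !inE !negb_or nax nab xb /= /adj /= nax xb (eq_sym b a) nab.
    by rewrite axO xbO set2C abO.
  have h2 : gamma * d a b < d x b.
    apply: (L a b x b) => //.
    apply: connect1; apply: adjD => //.
    rewrite [[set a; b]]set2C; apply: set2_not_in; by rewrite // eq_sym.
  have h3 := dtri hm x a b.
  rewrite (dsym hm c a) (dsym hm x a) in hle h3.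
  have h5 : 0 < gamma * (d a x + d a b - gamma * d a b).
    by apply: mulr_gt0 => //; lra.
  nra.
Qed.
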